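(* There exists a universal constant $K_0$ such that for all positive integers $s$, $$\sum_{0\le k\le s/2}(1+t_k^2)\,p_k\le K_0.$$
   Context: For a positive integer $s$ and integers $0\le k\le s/2$, let $p_k=\binom{s-k}{k}\big/\sum_{0\le j\le s/2}\binom{s-j}{j}$ (so $p_k\ge0$ and $\sum_k p_k=1$; the denominator is the Fibonacci number $Fib_{s+1}$). Let $c_0=(5-\sqrt5)/10$, $k_0=\lfloor c_0 s\rfloor$, and $t_k=5^{3/4}(k-k_0)/\sqrt{s}$. *)

(* Defs.v *)
From Stdlib Require Import Reals Lra Lia ZArith.
Open Scope R_scope.

Definition floorR (x : R) : Z := (up x - 1)%Z.

Definition binomR (n k : nat) : R := Binomial.C n k.

(* denominator: sum_{0<=j<=s/2} C(s-j, j)  (= Fib_{s+1}); s/2 is floor division *)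
Definition denom (s : nat) : R := sum_f_R0 (fun j => binomR (s - j) j) (Nat.div s 2).

Definition p_k (s k : nat) : R := binomR (s - k) k / denom s.

Definition c0 : R := (5 - sqrt 5) / 10.

Definition k0 (s : nat) : Z := floorR (c0 * INR s).

Definition t_k (s k : nat) : R :=
  Rpower 5 (3/4) * (INR k - IZR (k0 s)) / sqrt (INR s).

(* Main.v *)
Require Import Defs.
From Stdlib Require Import Reals.
From Stdlib Require Import Lra Lia Psatz.
Open Scope R_scope.

Lemma binom_rec n k : INR (k+1) * INR (n+k+2) * Binomial.C (n+k+1) (k+1) =
  INR (n+2) * INR (n+1) * Binomial.C (n+k+2) k.
Proof.
  unfold Binomial.C.
  replace (n+k+1-(k+1))%nat with n by lia.
  replace (n+k+2-k)%nat with (S (S n)) by lia.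
  replace (n+k+2)%nat with (S (n+k+1)) by lia.
  replace (k+1)%nat with (S k) by lia.
  replace (n+2)%nat with (S (S n)) by lia.
  replace (n+1)%nat with (S n) by lia.
  rewrite !fact_simpl, !mult_INR.
  assert (H1 := INR_fact_neq_0 k). assert (H2 := INR_fact_neq_0 n).
  assert (H3 := INR_fact_neq_0 (n+k+1)).
  assert (0 < INR (S k)) by (apply lt_0_INR; lia).
  assert (0 < INR (S n)) by (apply lt_0_INR; lia).
  assert (0 < INR (S (S n))) by (apply lt_0_INR; lia).
  field; repeat split; lra.
Qed.

Lemma telescope (h b : nat -> R) m :
  (forall k, (k < m)%nat -> h k = b k - b (S k)) -> h m = b m ->
  sum_f_R0 h m = b 0%nat.
Proof.
  intros H Hm.
  assert (G : forall j, (j < m)%nat -> sum_f_R0 h j = b 0%nat - b (S j)).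
  { induction j; intros Hj.
    - simpl. apply H; lia.
    - simpl. rewrite IHj by lia. rewrite H by lia. ring. }
  destruct m.
  - simpl; exact Hm.
  - simpl. rewrite G by lia. rewrite Hm. ring.
Qed.

Lemma sum_lin (f g : nat -> R) c1 c2 N m :
  N <> 0 ->
  sum_f_R0 (fun k => (c1 * f k + c2 * g k) / N) m =
  (c1 * sum_f_R0 f m + c2 * sum_f_R0 g m) / N.
Proof.
  intros HN. induction m; simpl.
  - reflexivity.
  - rewrite IHm. field; auto.
Qed.

Lemma sum_lin2 (f g : nat -> R) c1 c2 m :
  sum_f_R0 (fun k => c1 * f k + c2 * g k) m =
  c1 * sum_f_R0 f m + c2 * sum_f_R0 g m.
Proof.
  induction m; simpl.
  - reflexivity.
  - rewrite IHm. ring.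
Qed.

Lemma binom_nonneg n k : 0 <= binomR n k.
Proof.
  unfold binomR, Binomial.C.
  apply Rle_mult_inv_pos. apply pos_INR.
  apply Rmult_lt_0_compat; apply INR_fact_lt_0.
Qed.

Lemma sum_ge0 (f : nat -> R) m : (forall k, 0 <= f k) -> f 0%nat <= sum_f_R0 f m.
Proof.
  intros H. induction m; simpl. lra. specialize (H (S m)). lra.
Qed.

Theorem lemma6 : exists K0 : R, forall s : nat, (0 < s)%nat ->
  sum_f_R0 (fun k => (1 + (t_k s k) ^ 2) * p_k s k) (Nat.div s 2) <= K0.
Proof.
  exists 151. intros s Hs.
  set (m := Nat.div s 2).
  set (S := INR s).
  set (r := c0 * S).
  set (a := fun k => binomR (s - k) k).
  set (N := denom s).
  assert (HS1 : 1 <= S) by (unfold S; apply (le_INR 1); lia).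
  assert (Hsq : sqrt 5 * sqrt 5 = 5) by (apply sqrt_sqrt; lra).
  assert (Hsq0 : 0 <= sqrt 5) by apply sqrt_pos.
  assert (Hs2 : 2 <= sqrt 5) by nra.
  assert (Hs5 : sqrt 5 <= 5) by nra.
  assert (Hc : 5 * c0^2 - 5 * c0 + 1 = 0) by (unfold c0; nra).
  assert (Hc0 : 0 <= c0 <= 3/10) by (unfold c0; lra).
  assert (Ha0 : forall k, 0 <= a k) by (intros; apply binom_nonneg).
  assert (HN : 1 <= N).
  { unfold N, denom. fold a.
    replace 1 with (a 0%nat). apply sum_ge0; auto.
    unfold a, binomR. rewrite Nat.sub_0_r. unfold Binomial.C.
    rewrite Nat.sub_0_r. simpl. field. apply INR_fact_neq_0. }
  assert (Hm2 : (2 * m <= s)%nat) by (unfold m; apply Nat.mul_div_le; lia).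
  assert (Hmod : (s = 2 * m \/ s = 2 * m + 1)%nat).
  { unfold m. pose proof (Nat.div_mod s 2). pose proof (Nat.mod_upper_bound s 2). lia. }
  set (b := fun k => (INR k - r) * INR k * (S - INR k + 1) * a k).
  set (D := fun k => let x := INR k in
     ((x - r) * x * (S - x + 1) - (x - r + 1) * (S - 2*x) * (S - 2*x - 1)) * a k).
  assert (HD0 : sum_f_R0 D m = 0).
  { replace 0 with (b 0%nat) by (unfold b; simpl; ring).
    apply telescope.
    - intros k Hk.
      assert (Hk2 : (2 * k + 2 <= s)%nat) by lia.
      set (n := (s - 2*k - 2)%nat).
      assert (Hsn : s = (n + 2*k + 2)%nat) by (unfold n; lia).
      assert (Hid : INR (k+1) * INR (n+k+2) * a (Datatypes.S k) =
                    INR (n+2) * INR (n+1) * a k).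
      { unfold a, binomR.
        replace (s - Datatypes.S k)%nat with (n+k+1)%nat by lia.
        replace (s - k)%nat with (n+k+2)%nat by lia.
        replace (Datatypes.S k) with (k+1)%nat by lia.
        apply binom_rec. }
      assert (ES : S = INR n + 2 * INR k + 2).
      { unfold S. rewrite Hsn, !plus_INR, mult_INR. simpl. ring. }
      rewrite !plus_INR in Hid. simpl in Hid.
      unfold D, b. rewrite S_INR.
      replace ((INR k + 1 - r) * (INR k + 1) * (S - (INR k + 1) + 1) * a (Datatypes.S k))
        with ((INR k + 1 - r) * ((INR k + 1) * (INR n + INR k + (1 + 1)) * a (Datatypes.S k)))
        by (rewrite ES; ring).
      rewrite Hid. rewrite ES. ring.
    - unfold D, b.
      assert (E : (S - 2 * INR m) * (S - 2 * INR m - 1) = 0).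
      { unfold S. destruct Hmod as [E|E]; rewrite E, ?plus_INR, mult_INR; simpl; ring. }
      cbv zeta. replace ((INR m - r + 1) * (S - 2 * INR m) * (S - 2 * INR m - 1))
        with ((INR m - r + 1) * ((S - 2 * INR m) * (S - 2 * INR m - 1))) by ring.
      rewrite E. ring. }
  set (Q := sum_f_R0 (fun k => (INR k - r)^2 * a k) m).
  assert (HQ : Q <= 2 * S * N).
  { assert (Hle : sum_f_R0 (fun k => S * ((INR k - r)^2 * a k) + (- 2 * S^2) * a k) m
                  <= sum_f_R0 D m).
    { apply sum_Rle. intros k Hk.
      unfold D. cbv zeta.
      set (x := INR k).
      assert (Hx0 : 0 <= x) by apply pos_INR.
      assert (Hx2 : 2 * x <= S).
      { unfold x, S. replace 2 with (INR 2) by (simpl; ring). rewrite <- mult_INR.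
        apply le_INR. lia. }
      assert (Eq : (x - r) * x * (S - x + 1) - (x - r + 1) * (S - 2 * x) * (S - 2 * x - 1)
                = 5 * (x - r)^2 * (S - r - x) + (x - r) * (S - x) - (S - 2*x) * (S - 2*x - 1)).
      { replace ((x - r) * x * (S - x + 1) - (x - r + 1) * (S - 2 * x) * (S - 2 * x - 1))
          with (5 * (x - r)^2 * (S - r - x) + (x - r) * (S - x) - (S - 2*x) * (S - 2*x - 1)
                - (x - r) * S^2 * (5 * c0^2 - 5 * c0 + 1)) by (unfold r; ring).
        rewrite Hc. ring. }
      rewrite Eq.
      assert (Hr0 : 0 <= r) by (unfold r; nra).
      assert (Hr1 : 5 * (S - r - x) >= S) by (unfold r; nra).
      assert (T1 : 5 * (x - r)^2 * (S - r - x) >= S * (x - r)^2).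
      { assert (0 <= (x - r)^2 * (5 * (S - r - x) - S)).
        { apply Rmult_le_pos. apply pow2_ge_0. lra. }
        lra. }
      assert (Hr2 : r <= S) by (unfold r; nra).
      assert (T2 : (x - r) * (S - x) >= - S^2).
      { assert (0 <= (x - r + S) * (S - x)) by (apply Rmult_le_pos; lra).
        assert (0 <= S * x) by (apply Rmult_le_pos; lra). nra. }
      assert (T3 : (S - 2*x) * (S - 2*x - 1) <= S^2).
      { assert (0 <= (S - 2*x) * (2 * x)) by (apply Rmult_le_pos; lra). nra. }
      specialize (Ha0 k).
      assert (0 <= (5 * (x - r)^2 * (S - r - x) + (x - r) * (S - x) -
         (S - 2 * x) * (S - 2 * x - 1) - (S * (x - r)^2 - 2 * S^2)) * a k)
        by (apply Rmult_le_pos; lra).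
      nra. }
    rewrite HD0, sum_lin2 in Hle. fold Q in Hle.
    assert (EN : N = sum_f_R0 a m) by reflexivity. rewrite <- EN in Hle.
    apply Rmult_le_reg_l with S; [lra|]. nra. }
  set (c1 := 1 + 50 / S). set (c2 := 50 / S).
  apply Rle_trans with (sum_f_R0 (fun k => (c1 * a k + c2 * ((INR k - r)^2 * a k)) / N) m).
  - apply sum_Rle. intros k Hk.
    unfold p_k. fold N. unfold t_k. fold S.
    set (P := Rpower 5 (3/4)).
    assert (HP0 : 0 < P) by (unfold P, Rpower; apply exp_pos).
    assert (HP5 : P < 5).
    { unfold P. rewrite <- (Rpower_1 5) at 2 by lra. apply Rpower_lt; lra. }
    set (K := IZR (k0 s)).
    assert (HK : r - 1 < K <= r).
    { unfold K, k0, floorR. fold S. fold r. rewrite minus_IZR.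
      destruct (archimed r). simpl. lra. }
    assert (Hsqs : sqrt S * sqrt S = S) by (apply sqrt_sqrt; lra).
    assert (Hsqp : 0 < sqrt S) by (apply sqrt_lt_R0; lra).
    assert (Et : (P * (INR k - K) / sqrt S)^2 = P^2 * (INR k - K)^2 / S).
    { set (q := sqrt S) in *. rewrite <- Hsqs. field. lra. }
    rewrite Et. fold (a k) in *. change (binomR (s - k) k) with (a k).
    assert (HN0 : 0 < N) by lra.
    unfold Rdiv. rewrite <- Rmult_assoc.
    apply Rmult_le_compat_r. left; apply Rinv_0_lt_compat; lra.
    specialize (Ha0 k).
    assert (B : P^2 * (INR k - K)^2 * / S <= 25 * (2 * (INR k - r)^2 + 2) * / S).
    { apply Rmult_le_compat_r. left; apply Rinv_0_lt_compat; lra.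
      assert (P^2 <= 25) by nra.
      assert ((INR k - K)^2 <= 2 * (INR k - r)^2 + 2).
      { assert (0 <= ((INR k - r) - (r - K))^2) by apply pow2_ge_0.
        assert ((r - K) * (r - K) <= 1) by nra.
        nra. }
      apply Rmult_le_compat; try lra; apply pow2_ge_0. }
    unfold c1, c2. unfold Rdiv.
    replace ((1 + 50 * / S) * a k + 50 * / S * ((INR k - r) ^ 2 * a k))
      with ((1 + 25 * (2 * (INR k - r)^2 + 2) * / S) * a k) by ring.
    apply Rmult_le_compat_r; [exact Ha0|]. lra.
  - rewrite sum_lin by lra.
    change (sum_f_R0 (fun k => (INR k - r)^2 * a k) m) with Q.
    change (sum_f_R0 (fun k => a k) m) with N.
    apply Rle_trans with (c1 + c2 * (2 * S)).
    + apply Rmult_le_reg_r with N; [lra|].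
      unfold Rdiv. rewrite Rmult_assoc, Rinv_l by lra. rewrite Rmult_1_r.
      assert (0 <= c2) by (unfold c2; apply Rle_mult_inv_pos; lra).
      change (sum_f_R0 a m) with N.
      assert (c2 * Q <= c2 * (2 * S * N)) by (apply Rmult_le_compat_l; lra).
      lra.
    + unfold c1, c2. 
      assert (50 / S <= 50) by (apply Rmult_le_reg_r with S; [lra|]; unfold Rdiv; rewrite Rmult_assoc, Rinv_l by lra; nra).
      replace (50 / S * (2 * S)) with 100 by (field; lra). lra.
Qed.
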